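(* A tree $T$ satisfies $D(T)=\dim(T)+1$ if and only if $T$ is isomorphic to $P_n$ or to $K_{1,n}$ for some $n\ge 2$.
   Context: All graphs are finite and simple; $P_n$ is the path on $n$ vertices and $K_{1,n}$ the star with $n$ leaves. For a connected graph $G$ with shortest-path distance $d_G$, a set $S\subseteq V(G)$ is resolving if for any two distinct vertices $x,y$ there is $s\in S$ with $d_G(x,s)\neq d_G(y,s)$; the metric dimension $\dim(G)$ is the minimum size of a resolving set. A distinguishing coloring of a graph $G$ is a (not necessarily proper) vertex coloring such that the only automorphism of $G$ mapping every vertex to a vertex of the same color is the identity; the distinguishing number $D(G)$ is the minimum number of colors in a distinguishing coloring of $G$. *)

(* Defs.v *)
From mathcomp Require Import all_boot fingroup perm.
Set Implicit Arguments. Unset Strict Implicit. Unset Printing Implicit Defensive.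

Section Graphs.
Variables (T : finType) (e : rel T).

Definition simple_graph : Prop := symmetric e /\ irreflexive e.

Definition connected_graph : Prop := forall x y : T, connect e x y.

Definition acyclic_graph : Prop :=
  forall c : seq T, uniq c -> 3 <= size c -> ~~ path.cycle e c.

Definition is_tree : Prop := simple_graph /\ connected_graph /\ acyclic_graph.

Definition walk_of_len (x y : T) (n : nat) : bool :=
  [exists p : n.-tuple T, path e x p && (last x p == y)].

(* shortest-path distance d_G(x,y) (equals #|T| if no walk, irrelevant for
   connected graphs since a shortest walk has length < #|T|) *)
Definition dist (x y : T) : nat := find (walk_of_len x y) (iota 0 #|T|).

Definition resolving (S : {set T}) : bool :=
  [forall x, forall y, (x != y) ==> [exists s in S, dist x s != dist y s]].

(* metric dimension: minimum size of a resolving set (setT is resolving in a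
   connected graph, so the default value #|T| is never the strict minimum) *)
Definition metric_dim : nat :=
  \big[minn/#|T|]_(S : {set T} | resolving S) #|S|.

Definition is_automorphism (s : {perm T}) : bool :=
  [forall x, forall y, e x y == e (s x) (s y)].

Definition distinguishing (k : nat) (c : {ffun T -> 'I_k}) : bool :=
  [forall s : {perm T},
     (is_automorphism s && [forall x, c (s x) == c x]) ==> (s == 1%g)].

(* distinguishing number: least k with a distinguishing k-coloring
   (k = #|T| always works via an injective coloring) *)
Definition distinguishing_number : nat :=
  \big[minn/#|T|]_(k < #|T|.+1 | [exists c : {ffun T -> 'I_k}, distinguishing c]) k.

End Graphs.

Definition graph_iso (T U : finType) (e : rel T) (f : rel U) : Prop :=
  exists g : T -> U, bijective g /\ forall x y, e x y = f (g x) (g y).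

Definition path_rel (n : nat) : rel 'I_n :=
  fun i j => (i.+1 == j :> nat) || (j.+1 == i :> nat).

Definition star_rel (n : nat) : rel 'I_n.+1 :=
  fun i j => (i == ord0) != (j == ord0).

(* Main.v *)
Require Import Defs.
From mathcomp Require Import all_boot fingroup perm zify.
Set Implicit Arguments. Unset Strict Implicit. Unset Printing Implicit Defensive.

Section BigMin.
Variables (I : finType) (P : pred I) (F : I -> nat) (d : nat).

Lemma bigmin_le i : P i -> \big[minn/d]_(j | P j) F j <= F i.
Proof.
move=> Pi; rewrite -big_filter.
have : i \in [seq j <- index_enum I | P j] by rewrite mem_filter Pi mem_index_enum.
elim: [seq j <- _ | _] => // j s IH; rewrite in_cons big_cons => /orP[/eqP<-|/IH h].
  exact: geq_minl.
exact: leq_trans (geq_minr _ _) h.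
Qed.

Lemma bigmin_ge m : m <= d -> (forall i, P i -> m <= F i) ->
  m <= \big[minn/d]_(j | P j) F j.
Proof.
move=> hd hF; elim/big_ind: _ => //.
by move=> x y hx hy; rewrite leq_min hx hy.
Qed.

Lemma bigmin_attained :
  \big[minn/d]_(j | P j) F j = d \/ exists2 i, P i & \big[minn/d]_(j | P j) F j = F i.
Proof.
elim/big_ind: _; first by left.
  by move=> x y hx hy; case: (leqP x y).
by move=> i Pi; right; exists i.
Qed.
End BigMin.

Section Walks.
Variables (T : finType) (e : rel T).

Lemma walkP x y n : reflect (exists p : seq T, [/\ size p = n, path e x p & last x p = y])
  (walk_of_len e x y n).
Proof.
apply: (iffP existsP) => [[p /andP[hp /eqP hl]]|[p [hs hp hl]]].
  by exists (val p); rewrite size_tuple.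
have hs' : size p == n by rewrite hs.
by exists (Tuple hs'); rewrite /= hp hl eqxx.
Qed.

Lemma walk0 x : walk_of_len e x x 0.
Proof. by apply/walkP; exists [::]. Qed.

Lemma walk0_eq x y : walk_of_len e x y 0 -> x = y.
Proof. by case/walkP=> [[|a p] [hs _ hl]]. Qed.

Lemma walk_cons x z y n : e x z -> walk_of_len e z y n -> walk_of_len e x y n.+1.
Proof.
move=> hxz /walkP[p [hs hp hl]]; apply/walkP; exists (z :: p).
by rewrite /= hs hxz hp hl.
Qed.

Lemma walk_cat x y z m n : walk_of_len e x y m -> walk_of_len e y z n ->
  walk_of_len e x z (m + n).
Proof.
move=> /walkP[p [hs hp hl]] /walkP[q [hs' hq hl']]; apply/walkP; exists (p ++ q).
by rewrite size_cat cat_path last_cat hl hs hs' hp hq.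
Qed.

Lemma dist_le x y n : walk_of_len e x y n -> dist e x y <= n.
Proof.
move=> hw; rewrite /dist; case: (ltnP n #|T|) => hn.
  have hmem : has (walk_of_len e x y) (iota 0 #|T|).
    by apply/hasP; exists n => //; rewrite mem_iota.
  case: (leqP (find (walk_of_len e x y) (iota 0 #|T|)) n) => // hlt.
  by have := before_find 0 hlt; rewrite nth_iota // hw.
by apply: leq_trans (find_size _ _) _; rewrite size_iota.
Qed.

Lemma dist_min x y n : n < dist e x y -> ~~ walk_of_len e x y n.
Proof.
move=> hn; rewrite /dist in hn.
have hlt : n < #|T|.
  by apply: leq_trans hn _; rewrite -{2}(size_iota 0 #|T|) find_size.
by have := before_find 0 hn; rewrite nth_iota // add0n => ->.
Qed.

Lemma dist0 x : dist e x x = 0.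
Proof. by apply/eqP; rewrite -leqn0; apply: dist_le; apply: walk0. Qed.

Lemma dist_eq0 x y : dist e x y = 0 -> x = y.
Proof.
move=> h; rewrite /dist in h.
have hT : 0 < #|T| by apply/card_gt0P; exists x.
have hh : has (walk_of_len e x y) (iota 0 #|T|).
  by rewrite has_find h size_iota.
by have := nth_find 0 hh; rewrite h nth_iota // => /walk0_eq.
Qed.

Lemma dist_eq0P x y : (dist e x y == 0) = (x == y).
Proof.
apply/eqP/eqP => [/dist_eq0 //|->]; exact: dist0.
Qed.

Lemma dist_gt0 x y : x != y -> 0 < dist e x y.
Proof. by rewrite lt0n dist_eq0P. Qed.

Hypothesis conn : connected_graph e.

Lemma walk_short x y : exists2 n, n < #|T| & walk_of_len e x y n.
Proof.
have /connectP[p hp hl] := conn x y.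
rewrite hl; case: (shortenP hp) => p' hp' hu _.
exists (size p'); last by apply/walkP; exists p'.
by have := max_card (mem (x :: p')); rewrite (card_uniqP hu).
Qed.

Lemma dist_walk x y : walk_of_len e x y (dist e x y).
Proof.
have [n hn hw] := walk_short x y.
have hh : has (walk_of_len e x y) (iota 0 #|T|).
  by apply/hasP; exists n => //; rewrite mem_iota.
have hi : find (walk_of_len e x y) (iota 0 #|T|) < #|T|.
  by rewrite -{2}(size_iota 0 #|T|) -has_find.
by have := nth_find 0 hh; rewrite nth_iota.
Qed.

End Walks.

Section Walks2.
Variables (T : finType) (e : rel T).
Lemma dist_walk_of x y n : walk_of_len e x y n -> n < #|T| -> walk_of_len e x y (dist e x y).
Proof.
move=> hw hn.
have hh : has (walk_of_len e x y) (iota 0 #|T|).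
  by apply/hasP; exists n => //; rewrite mem_iota.
have hi : find (walk_of_len e x y) (iota 0 #|T|) < #|T|.
  by rewrite -{2}(size_iota 0 #|T|) -has_find.
by have := nth_find 0 hh; rewrite nth_iota.
Qed.
End Walks2.

Section Dist.
Variables (T : finType) (e : rel T).
Hypothesis esym : symmetric e.
Hypothesis conn : connected_graph e.

Lemma walk_sym x y n : walk_of_len e x y n -> walk_of_len e y x n.
Proof.
case/walkP=> p [hs hp hl]; apply/walkP; exists (rev (belast x p)); split.
- by rewrite size_rev size_belast.
- rewrite -hl rev_path; apply: sub_path hp => a b; by rewrite esym.
- have h : last x p :: rev (belast x p) = rcons (rev p) x.
    by rewrite -rev_rcons -lastI rev_cons.
  rewrite -hl.
  transitivity (last x (last x p :: rev (belast x p))); first by [].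
  by rewrite h last_rcons.
Qed.

Lemma dist_sym x y : dist e x y = dist e y x.
Proof.
apply/eqP; rewrite eqn_leq; apply/andP; split; apply: dist_le; apply: walk_sym;
  exact: dist_walk.
Qed.

Lemma dist_tri x y z : dist e x z <= dist e x y + dist e y z.
Proof. apply: dist_le; apply: walk_cat; exact: dist_walk. Qed.

Lemma walk1 x y : e x y -> walk_of_len e x y 1.
Proof. by move=> h; apply: walk_cons h (walk0 _ _). Qed.

Lemma dist_adj x y : e x y -> dist e x y <= 1.
Proof. by move=> h; apply: dist_le; apply: walk1. Qed.

Lemma dist_adj_le x y z : e x y -> dist e x z <= (dist e y z).+1.
Proof. by move=> h; apply: leq_trans (dist_tri x y z) _; rewrite -add1n leq_add2r dist_adj. Qed.

Lemma dist_lt x y : dist e x y < #|T|.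
Proof. have [n hn hw] := walk_short conn x y; exact: leq_ltn_trans (dist_le hw) hn. Qed.

Lemma dist_step x y : x != y -> exists2 z, e x z & dist e z y = (dist e x y).-1.
Proof.
move=> hxy; have := dist_walk conn x y; case/walkP=> p [hs hp hl].
case: p hs hp hl => [|z p] hs hp hl.
  by move: hxy; rewrite -hl /= eqxx.
case/andP: hp => hxz hp; exists z => //.
apply/eqP; rewrite eqn_leq; apply/andP; split.
  by apply: dist_le; apply/walkP; exists p; rewrite -hs.
by rewrite -ltnS (ltn_predK (dist_gt0 e hxy)) dist_adj_le.
Qed.

Lemma walk_suffix x p y : path e x p -> y \in p ->
  exists2 n, n < size p & walk_of_len e y (last x p) n.
Proof.
move=> hp hy; move: hp; case/splitPr: hy => p1 p2.
rewrite cat_path last_cat /= => /andP[_ /andP[_ hp2]].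
exists (size p2); first by rewrite size_cat /= addnS ltnS leq_addl.
by apply/walkP; exists p2.
Qed.

Lemma walk_suffix_le x p y : path e x p -> y \in x :: p -> dist e y (last x p) <= size p.
Proof.
rewrite inE => hp /orP[/eqP->|hy].
  by apply: dist_le; apply/walkP; exists p.
have [n hn hw] := walk_suffix hp hy; exact: ltnW (leq_ltn_trans (dist_le hw) hn).
Qed.

End Dist.

Section Aut.
Variables (T : finType) (e : rel T).

Lemma aut_walk (s : {perm T}) x y n : is_automorphism e s ->
  walk_of_len e x y n -> walk_of_len e (s x) (s y) n.
Proof.
move=> /forallP ha /walkP[p [hs hp hl]]; apply/walkP; exists (map s p); split.
- by rewrite size_map.
- elim: p x hp {hs hl} => //= z p IH x /andP[hxz hp].
  by rewrite -(eqP (forallP (ha x) z)) hxz IH.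
- by rewrite -hl last_map.
Qed.

Lemma aut_inv (s : {perm T}) : is_automorphism e s -> is_automorphism e (s^-1)%g.
Proof.
move=> /forallP ha; apply/forallP => x; apply/forallP => y.
by rewrite (eqP (forallP (ha ((s^-1)%g x)) ((s^-1)%g y))) !permKV.
Qed.

Lemma aut_mul (s t : {perm T}) : is_automorphism e s -> is_automorphism e t ->
  is_automorphism e (s * t)%g.
Proof.
move=> /forallP hs /forallP ht; apply/forallP => x; apply/forallP => y.
rewrite !permM (eqP (forallP (hs x) y)); exact: (forallP (ht (s x)) (s y)).
Qed.

Lemma aut_edge (s : {perm T}) x y : is_automorphism e s -> e (s x) (s y) = e x y.
Proof. by move=> /forallP ha; rewrite (eqP (forallP (ha x) y)). Qed.

Lemma aut_walkE (s : {perm T}) x y n : is_automorphism e s ->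
  walk_of_len e (s x) (s y) n = walk_of_len e x y n.
Proof.
move=> ha; apply/idP/idP; last exact: aut_walk.
by move/(aut_walk (aut_inv ha)); rewrite !permK.
Qed.

Lemma aut_dist (s : {perm T}) x y : is_automorphism e s ->
  dist e (s x) (s y) = dist e x y.
Proof. by move=> ha; rewrite /dist; apply: eq_find => n; rewrite aut_walkE. Qed.

Definition deg x := #|[set y | e x y]|.

Lemma aut_deg (s : {perm T}) x : is_automorphism e s -> deg (s x) = deg x.
Proof.
move=> ha; rewrite /deg -[RHS](card_imset _ (@perm_inj _ s)); apply: eq_card => y.
rewrite inE; apply/idP/imsetP => [h|[z]].
  exists ((s^-1)%g y); last by rewrite permKV.
  by rewrite inE -(aut_edge x _ ha) permKV.
by rewrite inE => hz ->; rewrite aut_edge.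
Qed.

Lemma aut_fix_resolving (s : {perm T}) S : is_automorphism e s -> resolving e S ->
  (forall x, x \in S -> s x = x) -> s = 1%g.
Proof.
move=> ha /forallP hr hS; apply/permP => x; rewrite perm1.
apply/eqP; apply/negPn/negP => hne.
have /existsP[z /andP[hz]] := implyP (forallP (hr (s x)) x) hne.
by rewrite -{1}(hS z hz) aut_dist // eqxx.
Qed.

End Aut.

Section Tree.
Variables (T : finType) (e : rel T).
Hypothesis tree : is_tree e.

Let sym_e : symmetric e. Proof. by case: tree => [[]]. Qed.
Let eirr : irreflexive e. Proof. by case: tree => [[]]. Qed.
Let conn : connected_graph e. Proof. by case: tree => _ []. Qed.
Let acyc : acyclic_graph e. Proof. by case: tree => _ []. Qed.

Lemma walk_prefix x p y : path e x p -> y \in p -> y != last x p ->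
  exists2 n, n < size p & walk_of_len e x y n.
Proof.
move=> hp hy0; move: hp; case/splitPr: hy0 => p1 p2.
rewrite cat_path last_cat /= => /andP[hp1 /andP[hy _]] hl.
exists (size p1).+1.
  case: p2 hl => [|z p2] hl; first by rewrite eqxx in hl.
  by rewrite size_cat /= addnS ltnS -addSnnS leq_addr.
by apply/walkP; exists (rcons p1 y); rewrite size_rcons rcons_path hp1 hy last_rcons.
Qed.

Lemma tree_cut v u1 u2 p : e v u1 -> e v u2 -> u1 != u2 ->
  path e u1 p -> last u1 p = u2 -> v \in u1 :: p.
Proof.
move=> h1 h2 hne hp hl; apply/negPn/negP => hv.
move: hl; case: (shortenP hp) => p' hp' hu hsub hl.
have hvu1 : v != u1 by apply/eqP => h; move: h1; rewrite h eirr.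
have hvp' : v \notin p' by apply/negP => /hsub hvp; move: hv; rewrite inE hvp orbT.
apply: (negP (acyc (c := v :: u1 :: p') _ _)).
- by rewrite cons_uniq inE negb_or hvu1 hvp' hu.
- case: p' {hp' hu hsub hvp'} hl => [|z p'] hl /=; first by move: hne; rewrite -hl eqxx.
  by [].
- rewrite /= h1 rcons_path hp' hl sym_e h2; by [].
Qed.

Lemma cut_dist v a b x : e v a -> e v b -> a != b ->
  dist e a x <= dist e v x -> dist e b x <= dist e v x -> False.
Proof.
move=> ha hb hab hax hbx.
have /walkP[p1 [hs1 hp1 hl1]] := dist_walk conn a x.
have /walkP[p2 [hs2 hp2 hl2]] := dist_walk conn x b.
have hq : path e a (p1 ++ p2) by rewrite cat_path hp1 hl1 hp2.
have hl : last a (p1 ++ p2) = b by rewrite last_cat hl1.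
have := tree_cut ha hb hab hq hl; rewrite inE mem_cat => /or3P[/eqP hva|hv|hv].
- by move: ha; rewrite hva eirr.
- have [n hn hw] := walk_suffix hp1 hv; rewrite hl1 in hw.
  by have := leq_ltn_trans (dist_le hw) (leq_trans hn (leq_trans (eq_leq hs1) hax)); rewrite ltnn.
- have hvb : v != last x p2 by rewrite hl2; apply/eqP => h; move: hb; rewrite h eirr.
  have [n hn hw] := walk_prefix hp2 hv hvb.
  have := leq_ltn_trans (dist_le hw) (leq_trans hn (eq_leq hs2)).
  rewrite (dist_sym sym_e conn x v) (dist_sym sym_e conn x b) => /leq_trans/(_ hbx).
  by rewrite ltnn.
Qed.

Lemma tree_parent x v u1 u2 : e v u1 -> e v u2 ->
  dist e u1 x < dist e v x -> dist e u2 x < dist e v x -> u1 = u2.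
Proof.
move=> h1 h2 d1 d2; apply/eqP/negPn/negP => hne.
exact: (cut_dist h1 h2 hne (ltnW d1) (ltnW d2)).
Qed.

Lemma tree_bip u v x : e u v -> dist e u x != dist e v x.
Proof.
move=> huv; apply/negP => /eqP h.
have hux : u != x.
  apply/negP => /eqP hux; move: h; rewrite hux dist0 => /esym/dist_eq0 hv.
  by move: huv; rewrite hux hv eirr.
have [u' hu' hd] := dist_step conn hux.
have hne : v != u'.
  apply/negP => /eqP hv; move: hd (dist_gt0 e hux); rewrite -hv -h.
  by case: (dist e u x) => [|n] // /eqP; rewrite eqn_leq ltnn.
apply: (cut_dist (x := x) huv hu' hne); first by rewrite h.
by rewrite hd leq_pred.
Qed.

Lemma geo_uniq a b y y' : dist e a y + dist e y b = dist e a b ->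
  dist e a y' + dist e y' b = dist e a b -> dist e a y = dist e a y' -> y = y'.
Proof.
move=> hy hy' hay.
have hyb : dist e y b = dist e y' b by apply/eqP; rewrite -(eqn_add2l (dist e a y)) {2}hay hy hy'.
move: {2}(dist e y b) (erefl (dist e y b)) => n hn.
elim: n y y' hy hy' hay hyb hn => [|n IH] y y' hy hy' hay hyb hn.
  by rewrite (dist_eq0 hn) (dist_eq0 (etrans (esym hyb) hn)).
have step : forall t, dist e a t + dist e t b = dist e a b -> dist e t b = n.+1 ->
    exists2 z, e t z & [/\ dist e z b = n, dist e a z = (dist e a t).+1 &
                          dist e a z + dist e z b = dist e a b].
  move=> t ht htb.
  have htb' : t != b by rewrite -(dist_eq0P e) htb.
  have [z hz hzd] := dist_step conn htb'; rewrite htb /= in hzd.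
  have h1 : dist e a z <= (dist e a t).+1.
    rewrite (dist_sym sym_e conn a z) (dist_sym sym_e conn a t).
    by apply: (dist_adj_le conn); rewrite sym_e.
  have h2 : dist e a b <= dist e a z + n by rewrite -hzd (dist_tri conn).
  have h3 : dist e a z = (dist e a t).+1.
    apply/eqP; rewrite eqn_leq h1 /=; rewrite -ht htb addnS -addSn leq_add2r in h2; exact: h2.
  exists z => //; split => //; apply/eqP; by rewrite hzd eqn_leq h2 andbT h3 -ht htb addSnnS.
have [z hz [hzb haz hz']] := step y hy hn.
have [z' hz2 [hzb' haz' hz'']] := step y' hy' (etrans (esym hyb) hn).
have hzz : z = z'.
  apply: IH => //; first by rewrite haz haz' hay.
  by rewrite hzb hzb'.
rewrite -hzz in hz2 haz'.
apply: (tree_parent (x := a) (v := z)).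
- by rewrite sym_e.
- by rewrite sym_e.
- by rewrite (dist_sym sym_e conn y a) (dist_sym sym_e conn z a) haz.
- by rewrite (dist_sym sym_e conn y' a) (dist_sym sym_e conn z a) haz'.
Qed.

Lemma aut_geo (s : {perm T}) a b y : is_automorphism e s -> s a = a -> s b = b ->
  dist e a y + dist e y b = dist e a b -> s y = y.
Proof.
move=> hs ha hb hy; apply: (geo_uniq (a := a) (b := b)) => //.
- by rewrite -{1}ha -{1}hb !(aut_dist _ _ hs).
- by rewrite -{1}ha (aut_dist _ _ hs).
Qed.

Lemma far_leaf a w : a != w ->
  exists l, dist e a w + dist e w l = dist e a l /\ deg e l <= 1.
Proof.
move=> haw.
pose D := fun v => dist e a v == dist e a w + dist e w v.
have hwD : D w by rewrite /D dist0 addn0.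
case: (arg_maxnP (fun v => dist e a v) hwD) => l hlD hmax.
have hlD' : dist e a l = dist e a w + dist e w l by apply/eqP.
exists l; split; first by rewrite hlD'.
have hla : l != a.
  apply/negP => /eqP hl; move: hlD'; rewrite hl dist0 => /esym/eqP; rewrite addn_eq0 dist_eq0P.
  by rewrite (negbTE haw).
have hnb : forall n, e l n -> dist e n a < dist e l a.
  move=> n hn; rewrite (dist_sym sym_e conn n a) (dist_sym sym_e conn l a).
  rewrite ltn_neqAle; apply/andP; split.
    by rewrite (dist_sym sym_e conn a n) (dist_sym sym_e conn a l) eq_sym tree_bip.
  rewrite leqNgt; apply/negP => hgt.
  have h1 : dist e a n <= (dist e a l).+1.
    rewrite (dist_sym sym_e conn a n) (dist_sym sym_e conn a l).
    by apply: (dist_adj_le conn); rewrite sym_e.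
  have heq : dist e a n = (dist e a l).+1 by apply/eqP; rewrite eqn_leq h1 hgt.
  have hnD : D n.
    rewrite /D eqn_leq (dist_tri conn) /=.
    rewrite heq hlD' -addnS leq_add2l.
    by rewrite (dist_sym sym_e conn w n) (dist_sym sym_e conn w l); apply: (dist_adj_le conn); rewrite sym_e.
  by have := hmax n hnD; rewrite /= heq ltnn.
apply/card_le1P => n1; rewrite inE => h1 n2; rewrite !inE.
apply/idP/eqP => [h2|->//]; apply: (tree_parent (x := a) (v := l)) => //; exact: hnb.
Qed.

End Tree.

Section Aux.
Variables (T : finType) (e : rel T).
Hypothesis sym_e : symmetric e.
Hypothesis eirr : irreflexive e.
Hypothesis conn : connected_graph e.

Lemma closure_all (S : {set T}) x0 : x0 \in S ->
  (forall u v, u \in S -> e u v -> v \in S) -> forall x, x \in S.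
Proof.
move=> h0 hcl x; have /connectP[p hp ->] := conn x0 x.
elim: p x0 h0 hp => //= y p IH x0 h0 /andP[h1 h2].
exact: IH (hcl _ _ h0 h1) h2.
Qed.

Lemma deg1P x : deg e x = 1 -> exists q, [set y | e x y] = [set q].
Proof. by move/eqP/cards1P. Qed.

Lemma deg1_nbr x q : deg e x = 1 -> e x q -> forall y, e x y = (y == q).
Proof.
move=> /deg1P[q' hq'] hq y.
have hy : forall z, e x z = (z == q').
  by move=> z; have := congr1 (fun A : {set T} => z \in A) hq'; rewrite !inE.
by move: hq; rewrite !hy => /eqP ->.
Qed.

Lemma deg_pos x y : x != y -> 0 < deg e x.
Proof.
move=> hxy; have [z hz _] := dist_step conn hxy.
by apply/card_gt0P; exists z; rewrite inE.
Qed.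

Lemma leaf_dist u p x : deg e u = 1 -> e u p -> x != u ->
  dist e x u = (dist e x p).+1.
Proof.
move=> hu hup hxu; apply/eqP; rewrite eqn_leq; apply/andP; split.
  rewrite (dist_sym sym_e conn x u) (dist_sym sym_e conn x p); exact: dist_adj_le conn _ _ _ hup.
have hux : u != x by rewrite eq_sym.
have [z hz hzd] := dist_step conn hux.
have hzp : z = p by apply/eqP; rewrite -(deg1_nbr hu hup).
rewrite (dist_sym sym_e conn x u) (dist_sym sym_e conn x p) -hzp hzd.
by rewrite (ltn_predK (dist_gt0 e hux)).
Qed.

Lemma fix_compose (r t : {perm T}) (A : {set T}) l :
  (forall b, b \in A -> r b = b) -> (forall b, b \in A -> t b = b) ->
  t (r l) = r l -> forall b, b \in A -> (r * t * r^-1)%g b = b.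
Proof.
move=> hr ht _ b hb; rewrite !permM hr // ht //.
by rewrite -{1}(hr b hb) permK.
Qed.

Lemma dist_edge x y : e x y -> dist e x y = 1.
Proof.
move=> h; apply/eqP; rewrite eqn_leq dist_adj // dist_gt0 //.
by apply/eqP => hxy; move: h; rewrite hxy eirr.
Qed.

Lemma aut_card_nbr (s : {perm T}) (P : pred T) p : is_automorphism e s ->
  (forall x, P (s x) = P x) ->
  #|[set u | e (s p) u && P u]| = #|[set u | e p u && P u]|.
Proof.
move=> ha hP; rewrite -[RHS](card_imset _ (@perm_inj _ s)); apply: eq_card => y.
rewrite inE; apply/idP/imsetP => [h|[z]].
  exists ((s^-1)%g y); last by rewrite permKV.
  by rewrite inE -(aut_edge p _ ha) -hP !permKV.
by rewrite inE => hz ->; rewrite aut_edge // hP.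
Qed.

End Aux.

Lemma inord_index_inj (T : finType) (A : {set T}) n x y : #|A| <= n.+1 ->
  x \in A -> y \in A ->
  (inord (index x (enum A)) : 'I_n.+1) = inord (index y (enum A)) -> x = y.
Proof.
move=> hA hx hy /(congr1 (@nat_of_ord _)); rewrite !inordK.
- by move=> h; apply: (index_inj x _ _ h); rewrite mem_enum.
- by apply: leq_trans hA; rewrite cardE index_mem mem_enum.
- by apply: leq_trans hA; rewrite cardE index_mem mem_enum.
Qed.

Lemma index_enum_lt (T : finType) (A : {set T}) x : x \in A -> index x (enum A) < #|A|.
Proof. by rewrite cardE index_mem mem_enum. Qed.

Section Main.
Variables (T : finType) (e : rel T).
Hypothesis tree : is_tree e.

Let sym_e : symmetric e. Proof. by case: tree => [[]]. Qed.
Let eirr : irreflexive e. Proof. by case: tree => [[]]. Qed.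
Let conn : connected_graph e. Proof. by case: tree => _ []. Qed.

Variables (W : {set T}) (m : nat).
Hypothesis HW : #|W| = m.+2.
Hypothesis Hres : resolving e W.
Hypothesis Hnd : forall c : {ffun T -> 'I_m.+2}, ~~ distinguishing e c.

Definition fixes (s : {perm T}) (A : {set T}) := forall b, b \in A -> s b = b.

Lemma notdist (c : T -> 'I_m.+2) :
  exists2 s : {perm T}, is_automorphism e s & s != 1%g /\ forall x, c (s x) = c x.
Proof.
have := Hnd (finfun c); rewrite /distinguishing negb_forall => /existsP[s].
rewrite negb_imply => /andP[/andP[ha /forallP hc] hs]; exists s => //; split => // x.
by have := hc x; rewrite !ffunE => /eqP.
Qed.

Lemma fixW (s : {perm T}) w : w \in W -> fixes s (W :\ w) -> s w = w -> fixes s W.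
Proof.
move=> hw hf hsw b hb; case: (eqVneq b w) => [->//|hbw].
by apply: hf; rewrite in_setD1 hbw hb.
Qed.

Lemma fix_id (s : {perm T}) w : w \in W -> is_automorphism e s ->
  fixes s (W :\ w) -> s w = w -> s = 1%g.
Proof. move=> hw hs hf hsw; exact: aut_fix_resolving hs Hres (fixW hw hf hsw). Qed.

Section W1.
Variable w : T.
Hypothesis hw : w \in W.

Lemma cardW' : #|W :\ w| = m.+1.
Proof. by move: HW; rewrite (cardsD1 w W) hw add1n => -[]. Qed.

Definition colW x : 'I_m.+2 :=
  if x \in W :\ w then inord (index x (enum (W :\ w))).+1 else ord0.

Lemma colW_in b : b \in W :\ w -> (colW b : nat) = (index b (enum (W :\ w))).+1.
Proof.
move=> hb; rewrite /colW hb inordK // ltnS -cardW'; exact: index_enum_lt.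
Qed.

Lemma colW_inj b x : b \in W :\ w -> colW x = colW b -> x = b.
Proof.
move=> hb; case hx: (x \in W :\ w).
  move/(congr1 (@nat_of_ord _)); rewrite !colW_in // => -[] h; apply: (index_inj x _ _ h); by rewrite mem_enum.
have -> : colW x = ord0 by rewrite /colW hx.
by move/(congr1 (@nat_of_ord _)); rewrite colW_in.
Qed.

Lemma step1 : exists2 r : {perm T}, is_automorphism e r & r != 1%g /\ fixes r (W :\ w).
Proof.
have [s hs [hne hc]] := notdist colW.
by exists s => //; split => // b hb; apply: colW_inj hb (hc b).
Qed.

Lemma step2 a r l : a \in W :\ w -> is_automorphism e r -> fixes r (W :\ w) ->
  r l \notin W :\ w ->
  (forall s, is_automorphism e s -> fixes s (W :\ w) -> s l = l -> s = 1%g) ->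
  deg e a = deg e l.
Proof.
move=> ha hr hrf hy hfix; set y := r l in hy.
pose h x := if x == y then colW a else colW x.
have [t ht [hne hc]] := notdist h.
have hay : a != y by apply/eqP => hay; rewrite -hay ha in hy.
have hbf : forall b, b \in W :\ w -> b != a -> t b = b.
  move=> b hb hba.
  have hby : b != y by apply/eqP => hb'; rewrite -hb' hb in hy.
  have := hc b; rewrite /h (negbTE hby); case: eqP => [_ /(colW_inj hb) hab|_].
    by rewrite hab eqxx in hba.
  exact: colW_inj.
have := hc a; rewrite /h (negbTE hay); case: eqP => [hty _|_ /(colW_inj ha) hta].
  by rewrite -(aut_deg _ ht) hty /y (aut_deg _ hr).
have htf : fixes t (W :\ w).
  by move=> b hb; case: (eqVneq b a) => [->//|hba]; exact: hbf.
have hty : t y = y.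
  have := hc y; rewrite /h eqxx; case: eqP => [//|_ /(colW_inj ha) htya].
  by move/eqP: hay => hay; exfalso; apply: hay; apply: (@perm_inj _ t); rewrite hta htya.
exfalso; move: hne; apply/negP; rewrite negbK.
pose sg := (r * t * r^-1)%g.
have hsg : is_automorphism e sg by apply: aut_mul; [apply: aut_mul|apply: aut_inv].
have hsgf : fixes sg (W :\ w) by exact: fix_compose hrf htf hty.
have hsgl : sg l = l by rewrite /sg !permM -/y hty permK.
have := hfix sg hsg hsgf hsgl => hsg1.
apply/eqP/permP => x; rewrite perm1.
have := congr1 (fun f : {perm T} => f ((r^-1)%g x)) hsg1.
rewrite /sg !permM permKV perm1 => h1.
by apply: (@perm_inj _ (r^-1)%g).
Qed.

End W1.

Lemma W_ex_other w : w \in W -> exists a, a \in W :\ w.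
Proof. by move=> hw; apply/set0Pn; rewrite -card_gt0 cardW'. Qed.

Lemma W_leaf w : w \in W -> deg e w = 1.
Proof.
move=> hw; have [a ha] := W_ex_other hw.
have haw : a != w by move: ha; rewrite in_setD1 => /andP[].
have haW : a \in W by move: ha; rewrite in_setD1 => /andP[].
have [r hr [hrne hrf]] := step1 hw.
have hrw : r w \notin W :\ w.
  apply/negP => hin; have := hrf _ hin => /perm_inj hrw.
  by move: hin; rewrite hrw in_setD1 eqxx.
have d1 : deg e a = deg e w.
  apply: (step2 hw ha hr hrf hrw) => s hs hsf hsw; exact: fix_id hw hs hsf hsw.
have [l [hl hdl]] := far_leaf tree haw.
have hgeo : forall s : {perm T}, is_automorphism e s -> fixes s (W :\ w) -> s l = l -> s w = w.
  move=> s hs hsf hsl; apply: (aut_geo tree (a := a) (b := l)) => //; exact: hsf.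
have hrl : r l \notin W :\ w.
  apply/negP => hin; have := hrf _ hin => /perm_inj hrl.
  rewrite hrl in hin; move: hrne; apply/negP; rewrite negbK; apply/eqP.
  apply: (fix_id hw hr hrf); exact: (hgeo r hr hrf hrl).
have d2 : deg e a = deg e l.
  apply: (step2 hw ha hr hrf hrl) => s hs hsf hsl; exact: fix_id hw hs hsf (hgeo s hs hsf hsl).
apply/eqP; rewrite eqn_leq -d1 d2 hdl -d2 d1 /=.
by apply: (deg_pos conn (y := a)); rewrite eq_sym.
Qed.

Lemma W_twin w q : w \in W -> e w q ->
  (exists z, [/\ z \notin W, z != w, e q z & deg e z = 1]) \/ (forall x, x = w \/ x = q).
Proof.
move=> hw hwq; have [a ha] := W_ex_other hw.
have [r hr [hrne hrf]] := step1 hw.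
case: (boolP [exists s : {perm T}, [&& is_automorphism e s, s != 1%g,
                [forall b in W :\ w, s b == b] & s q == q]]).
- case/existsP=> s /and4P[hs hsne /forall_inP hsf /eqP hsq]; left.
  have hsf' : fixes s (W :\ w) by move=> b hb; apply/eqP; exact: hsf.
  have hsw : s w != w.
    by apply/negP => /eqP hsw; move: hsne; rewrite (fix_id hw hs hsf' hsw) eqxx.
  exists (s w); split => //.
  + apply/negP => hz.
    have hz' : s w \in W :\ w by rewrite in_setD1 hsw hz.
    by have := hsf' _ hz' => /perm_inj h; rewrite h eqxx in hsw.
  + by rewrite -{1}hsq (aut_edge _ _ hs) sym_e.
  + by rewrite (aut_deg _ hs) W_leaf.
- rewrite negb_exists => /forallP hnone; right.
  have hfix : forall s, is_automorphism e s -> fixes s (W :\ w) -> s q = q -> s = 1%g.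
    move=> s hs hsf hsq; apply/eqP; apply/negPn/negP => hne.
    have := hnone s; rewrite hs hne hsq eqxx /= andbT.
    by move/negP; apply; apply/forall_inP => b hb; rewrite hsf.
  have hdq : deg e q = 1.
    case hq: (r q \in W :\ w).
      have := hrf _ hq => /perm_inj hrq; rewrite hrq in hq.
      by apply: W_leaf; move: hq; rewrite in_setD1 => /andP[].
    rewrite -(step2 hw ha hr hrf (negbT hq) hfix); apply: W_leaf.
    by move: ha; rewrite in_setD1 => /andP[].
  have hqw : e q w by rewrite sym_e.
  have hS : forall x, x \in [set w; q].
    apply: (closure_all conn (x0 := w)); first by rewrite !inE eqxx.
    move=> u v; rewrite !inE => /orP[] /eqP -> h.
    + by rewrite (deg1_nbr (W_leaf hw) hwq) in h; rewrite h orbT.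
    + by rewrite (deg1_nbr hdq hqw) in h; rewrite h.
  by move=> x; have := hS x; rewrite !inE => /orP[] /eqP ->; [left|right].
Qed.

Lemma main_center : exists c, forall x, x != c -> e c x.
Proof.
case: (boolP [exists w in W, [exists q, e w q && [forall x, (x == w) || (x == q)]]]).
  case/exists_inP => w hw /existsP[q /andP[hwq /forallP hall]].
  exists q => x hxq; have := hall x; rewrite (negbTE hxq) orbF => /eqP ->.
  by rewrite sym_e.
rewrite negb_exists_in => /forall_inP hno.
have twin : forall w q, w \in W -> e w q ->
    exists z, [/\ z \notin W, z != w, e q z & deg e z = 1].
  move=> w q hw hwq; case: (W_twin hw hwq) => // hall.
  have := hno w hw; rewrite negb_exists => /forallP/(_ q); rewrite hwq /=.
  move/negP; case; apply/forallP => x; by case: (hall x) => ->; rewrite eqxx ?orbT.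
pose L p := [set u | e p u && (deg e u == 1)].
have tw2 : forall p u v, u \in L p -> v \in L p -> u \notin W -> v \notin W -> u = v.
  move=> p u v; rewrite !inE => /andP[hpu /eqP hu] /andP[hpv /eqP hv] huW hvW.
  apply/eqP/negPn/negP => huv.
  have /existsP[b /andP[hb hd]] := implyP (forallP (forallP Hres u) v) huv.
  have hbu : b != u by apply/eqP => hbu; rewrite -hbu hb in huW.
  have hbv : b != v by apply/eqP => hbv; rewrite -hbv hb in hvW.
  have hup : e u p by rewrite sym_e.
  have hvp : e v p by rewrite sym_e.
  move: hd; rewrite (dist_sym sym_e conn u b) (dist_sym sym_e conn v b).
  by rewrite (leaf_dist sym_e conn hu hup hbu) (leaf_dist sym_e conn hv hvp hbv) eqxx.
have hLcard : forall p, #|L p :\: W| <= 1.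
  move=> p; apply/card_le1P => u hu v; apply/idP/idP => [hv|]; last by rewrite inE => /eqP ->.
  rewrite inE; apply/eqP; move: hu hv; rewrite !in_setD => /andP[huW huL] /andP[hvW hvL].
  exact: tw2 hvL huL hvW huW.
case: (boolP [exists p, m.+2 < #|L p|]).
- case/existsP => p hp; exists p.
  have hWL : W \subset L p.
    apply/subsetP => b hb; apply/negPn/negP => hbL.
    have h1 : #|L p :&: W| <= m.+1.
      rewrite -(cardW' hb); apply: subset_leq_card; apply/subsetP => u.
      rewrite in_setI => /andP[huL huW]; rewrite in_setD1 huW andbT.
      by apply/eqP => hub; rewrite hub in huL; rewrite huL in hbL.
    have := cardsID W (L p) => hc.
    have := leq_add h1 (hLcard p); rewrite addn1 => h2.
    by move: hp; rewrite -hc ltnNge h2.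
  have [z hz] : exists z, z \in L p :\: W.
    apply/set0Pn; rewrite -card_gt0.
    have := cardsID W (L p) => hc.
    have h1 : #|L p :&: W| <= m.+2 by rewrite -HW; apply: subset_leq_card; apply: subsetIr.
    move: hp; rewrite -hc; case: #|L p :\: W| => // ; by rewrite addn0 ltnNge h1.
  have hnbr : forall y, e p y -> y \in L p.
    move=> y hpy; case hyW: (y \in W); first by apply: (subsetP hWL).
    suff -> : y = z by move: hz; rewrite inE => /andP[].
    apply/eqP/negPn/negP => hyz.
    have /existsP[b /andP[hb hd]] := implyP (forallP (forallP Hres y) z) hyz.
    have hbL := subsetP hWL b hb; move: (hbL); rewrite inE => /andP[hpb /eqP hdb].
    have hbp : e b p by rewrite sym_e.
    have hyb : y != b by apply/eqP => hyb; rewrite hyb hb in hyW.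
    have hzb : z != b.
      by apply/eqP => hzb; move: hz; rewrite inE hzb hb.
    have hyp : e y p by rewrite sym_e.
    have hzp : e z p by move: hz; rewrite !inE => /andP[_ /andP[hpz _]]; rewrite sym_e.
    move: hd; rewrite (leaf_dist sym_e conn hdb hbp hyb) (leaf_dist sym_e conn hdb hbp hzb).
    by rewrite (dist_edge eirr hyp) (dist_edge eirr hzp) eqxx.
  have hS : forall x, x \in p |: [set u | e p u].
    apply: (closure_all conn (x0 := p)); first by rewrite !inE eqxx.
    move=> u v; rewrite !inE => /orP[/eqP ->|hpu] h; first by rewrite h orbT.
    have := hnbr u hpu; rewrite inE => /andP[_ /eqP hu1].
    have hup : e u p by rewrite sym_e.
    by rewrite (deg1_nbr hu1 hup) in h; rewrite h.
  by move=> x hxp; have := hS x; rewrite !inE (negbTE hxp).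
rewrite negb_exists => /forallP hsmall.
have hLm : forall p, #|L p| <= m.+2 by move=> p; rewrite leqNgt; exact: hsmall.
pose Q := [set p | 1 < #|L p|].
have hQdeg : forall p, p \in Q -> deg e p != 1.
  move=> p; rewrite inE => hp; apply/eqP => hd.
  have : #|L p| <= deg e p.
    by apply: subset_leq_card; apply/subsetP => u; rewrite !inE => /andP[].
  by rewrite hd leqNgt hp.
have hQcard : #|Q| <= m.+2.
  pose nbr x := odflt x [pick y | e x y].
  have : Q \subset nbr @: W.
    apply/subsetP => p; rewrite inE => hp.
    have : 0 < #|L p :&: W|.
      have := cardsID W (L p) => hc.
      move: hp; rewrite -hc; case: #|L p :&: W| => // /leq_trans/(_ (hLcard p)).
      by rewrite ltnn.
    case/card_gt0P => u; rewrite !inE => /andP[/andP[hpu /eqP hu] huW].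
    apply/imsetP; exists u => //; rewrite /nbr; case: pickP => [y hy|hn] /=.
      have hup : e u p by rewrite sym_e.
      by rewrite (deg1_nbr hu hup) in hy; rewrite (eqP hy).
    by have := hn p; rewrite sym_e hpu.
  move/subset_leq_card => h; apply: leq_trans h _; rewrite -HW; exact: leq_imset_card.
pose col x : 'I_m.+2 := if x \in Q then inord (index x (enum Q)) else
  if [pick p in Q | e x p] is Some p then inord (index x (enum (L p))) else ord0.
have [s hs [hne hc]] := notdist col.
have hLs : forall p, #|L (s p)| = #|L p|.
  move=> p; apply: aut_card_nbr => // x; by rewrite (aut_deg _ hs).
have hQs : forall p, (s p \in Q) = (p \in Q) by move=> p; rewrite !inE hLs.
have hsQ : forall p, p \in Q -> s p = p.
  move=> p hp; have := hc p; rewrite /col hQs hp => h.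
  by apply: (inord_index_inj hQcard _ hp h); rewrite hQs.
have hsW : fixes s W.
  move=> w hw; have hw1 := W_leaf hw; have [q hq] := deg1P hw1.
  have hwq : e w q.
    by have := congr1 (fun A : {set T} => q \in A) hq; rewrite !inE eqxx.
  have [z [hzW hzw hqz hz1]] := twin w q hw hwq.
  have hqQ : q \in Q.
    rewrite inE; apply: leq_trans (_ : #|[set w; z]| <= _); first by rewrite cards2 eq_sym hzw.
    apply: subset_leq_card; apply/subsetP => u; rewrite !inE => /orP[] /eqP ->.
      by rewrite hw1 eqxx andbT sym_e.
    by rewrite hz1 eqxx andbT.
  have hsq : s q = q := hsQ q hqQ.
  have hwQ : w \notin Q by apply/negP => /hQdeg; rewrite hw1.
  have hsw1 : deg e (s w) = 1 by rewrite (aut_deg _ hs).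
  have hswQ : s w \notin Q by apply/negP => /hQdeg; rewrite hsw1.
  have hsqe : e (s w) q by rewrite -hsq (aut_edge _ _ hs).
  have pk : forall x, deg e x = 1 -> e x q -> [pick p in Q | e x p] = Some q.
    move=> x hx1 hxq; case: pickP => [p /andP[hpQ hxp]|hn].
      by rewrite (deg1_nbr hx1 hxq) in hxp; rewrite (eqP hxp).
    by have := hn q; rewrite hqQ hxq.
  have := hc w; rewrite /col (negbTE hswQ) (negbTE hwQ) (pk _ hsw1 hsqe) (pk _ hw1 hwq) => h.
  apply: (inord_index_inj (hLm q) _ _ h).
    by rewrite inE hsw1 eqxx andbT sym_e.
  by rewrite inE hw1 eqxx andbT sym_e.
by move: hne; rewrite (aut_fix_resolving hs Hres hsW) eqxx.
Qed.

End Main.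

Section DD.
Variables (T : finType) (e : rel T).

Lemma D_le k (c : {ffun T -> 'I_k}) : distinguishing e c -> k <= #|T| ->
  distinguishing_number e <= k.
Proof.
move=> hc hk; rewrite /distinguishing_number.
have hk' : k < #|T|.+1 by [].
have := @bigmin_le _ (fun i : 'I_#|T|.+1 => [exists c : {ffun T -> 'I_i}, distinguishing e c])
  (fun i => (i : nat)) #|T| (Ordinal hk'); apply.
by apply/existsP; exists c.
Qed.

Lemma D_ge m : m <= #|T| ->
  (forall k, k < m -> forall c : {ffun T -> 'I_k}, ~~ distinguishing e c) ->
  m <= distinguishing_number e.
Proof.
move=> hm hno; apply: bigmin_ge => // i /existsP[c hc].
by rewrite leqNgt; apply/negP => hi; move: (hno _ hi c); rewrite hc.
Qed.

Lemma dim_le S : resolving e S -> metric_dim e <= #|S|.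
Proof. by move=> hS; have := @bigmin_le _ (resolving e) (fun S : {set T} => #|S|) #|T| S; apply. Qed.

Lemma dim_ge m : m <= #|T| -> (forall S, resolving e S -> m <= #|S|) -> m <= metric_dim e.
Proof. by move=> hm h; apply: bigmin_ge. Qed.

Lemma resolvingT : resolving e [set: T].
Proof.
apply/forallP => x; apply/forallP => y; apply/implyP => hxy.
apply/existsP; exists x; rewrite inE /= dist0 eq_sym.
by rewrite (dist_eq0P e) eq_sym.
Qed.

Lemma dim_attained : exists2 S, resolving e S & #|S| = metric_dim e.
Proof.
case: (bigmin_attained (resolving e) (fun S : {set T} => #|S|) #|T|) => [h|[S hS h]].
  by exists [set: T]; [exact: resolvingT | rewrite /metric_dim h cardsT].
by exists S.
Qed.

Lemma dim_leT : metric_dim e <= #|T|.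
Proof. by rewrite -cardsT; apply: dim_le; apply: resolvingT. Qed.

(* a resolving set S gives a distinguishing coloring with #|S|.+1 colours *)
Lemma D_resolving S : resolving e S -> #|S| < #|T| -> distinguishing_number e <= #|S|.+1.
Proof.
move=> hS hST.
pose c := [ffun x => if x \in S then (inord (index x (enum S)).+1 : 'I_#|S|.+1) else ord0].
apply: (D_le (c := c)) => //.
apply/forallP => s; apply/implyP => /andP[hs /forallP hc].
have hfix : forall x, x \in S -> s x = x.
  move=> x hx; have := eqP (hc x); rewrite !ffunE hx.
  case hsx: (s x \in S); last by move/(congr1 (@nat_of_ord _)); rewrite inordK // ltnS index_enum_lt.
  move/(congr1 (@nat_of_ord _)); rewrite !inordK ?ltnS ?index_enum_lt // => -[] h.
  by apply: (index_inj x _ _ h); rewrite mem_enum.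
by rewrite (aut_fix_resolving hs hS hfix) eqxx.
Qed.

End DD.

Section Fwd.
Variables (T : finType) (e : rel T).
Hypothesis tree : is_tree e.

Let sym_e : symmetric e. Proof. by case: tree => [[]]. Qed.
Let eirr : irreflexive e. Proof. by case: tree => [[]]. Qed.
Let conn : connected_graph e. Proof. by case: tree => _ []. Qed.
Let acyc : acyclic_graph e. Proof. by case: tree => _ []. Qed.

Lemma path_iso_of w : resolving e [set w] -> graph_iso e (@path_rel #|T|).
Proof.
move=> hres.
pose g x := Ordinal (dist_lt conn x w).
have ginj : injective g.
  move=> x y /(congr1 (@nat_of_ord _)) /= h; apply/eqP/negPn/negP => hxy.
  have /existsP[s /andP[hs hd]] := implyP (forallP (forallP hres x) y) hxy.
  by move: hs hd; rewrite inE => /eqP ->; rewrite h eqxx.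
exists g; split; first by apply: inj_card_bij ginj _; rewrite card_ord.
move=> x y; rewrite /path_rel /=.
apply/idP/idP.
- move=> hxy.
  have hne : dist e x w != dist e y w.
    apply/eqP => h; have hg : g x = g y by apply: val_inj.
    by move: hxy; rewrite (ginj _ _ hg) eirr.
  have h1 : dist e x w <= (dist e y w).+1 by apply: (dist_adj_le conn).
  have h2 : dist e y w <= (dist e x w).+1 by apply: (dist_adj_le conn); rewrite sym_e.
  have : (dist e x w).+1 = dist e y w \/ (dist e y w).+1 = dist e x w by lia.
  by case=> ->; rewrite eqxx ?orbT.
- case/orP => /eqP h.
  + have hyw : y != w by rewrite -(dist_eq0P e) -h.
    have [z hz hzd] := dist_step conn hyw.
    have hzx : g z = g x by apply: val_inj; rewrite /= hzd -h.
    by rewrite -(ginj _ _ hzx) sym_e.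
  + have hxw : x != w by rewrite -(dist_eq0P e) -h.
    have [z hz hzd] := dist_step conn hxw.
    have hzy : g z = g y by apply: val_inj; rewrite /= hzd -h.
    by rewrite -(ginj _ _ hzy).
Qed.

Lemma star_iso_of c : (forall x, x != c -> e c x) -> graph_iso e (@star_rel #|T|.-1).
Proof.
move=> hc.
have hT : 0 < #|T| by apply/card_gt0P; exists c.
have hN : #|T|.-1.+1 = #|T| by rewrite prednK.
pose g0 x : 'I_#|T|.-1.+1 := cast_ord (esym hN) (enum_rank x).
have g0inj : injective g0.
  by move=> x y /cast_ord_inj /enum_rank_inj.
pose t := tperm (g0 c) ord0.
pose g x := t (g0 x).
have ginj : injective g by move=> x y /perm_inj /g0inj.
have hg0 : forall x, (g x == ord0) = (x == c).
  by move=> x; rewrite /g -(tpermL (g0 c) ord0) -/t (inj_eq perm_inj) (inj_eq g0inj).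
exists g; split; first by apply: inj_card_bij ginj _; rewrite card_ord hN.
move=> x y; rewrite /star_rel !hg0.
case: (eqVneq x c) => [->|hxc]; case: (eqVneq y c) => [->|hyc] /=.
- by rewrite eirr.
- exact: hc.
- by rewrite sym_e hc.
apply/negP => hxy.
have hxy' : x != y by apply/eqP => h; move: hxy; rewrite h eirr.
apply: (negP (acyc (c := [:: c; x; y]) _ _)) => //.
- by rewrite /= !inE negb_or eq_sym hxc eq_sym hyc hxy'.
- by rewrite /= hc // hxy sym_e hc.
Qed.

End Fwd.

Theorem forward (T : finType) (e : rel T) : is_tree e -> 2 <= #|T| ->
  distinguishing_number e = (metric_dim e).+1 ->
  exists n : nat, 2 <= n /\ (graph_iso e (@path_rel n) \/ graph_iso e (@star_rel n)).
Proof.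
move=> tree hT hD.
have hconn : connected_graph e by case: tree => _ [].
have [W hW hWk] := dim_attained e.
move: hD hWk; case hk: (metric_dim e) => [|[|m]] hD hWk.
- move/cards0_eq: hWk => hW0; rewrite hW0 in hW.
  have /card_gt1P[x [y [_ _ hxy]]] : 1 < #|[set: T]| by rewrite cardsT.
  have /existsP[s /andP[]] := implyP (forallP (forallP hW x) y) hxy.
  by rewrite inE.
- move/eqP/cards1P: hWk => [w hw]; rewrite hw in hW.
  by exists #|T|; split => //; left; apply: path_iso_of hW.
- have hnd : forall c : {ffun T -> 'I_m.+2}, ~~ distinguishing e c.
    move=> c; apply/negP => hc.
    have := D_le hc; rewrite -hk => /(_ (dim_leT e)).
    by rewrite hD hk ltnn.
  have [c hc] := main_center tree hWk hW hnd.
  case: (ltngtP #|T| 2) => hT2; first by rewrite ltnNge hT in hT2.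
  + exists #|T|.-1; split; first by rewrite -ltnS prednK // (leq_trans _ hT2).
    by right; apply: star_iso_of hc.
  + exfalso.
    have hres : resolving e [set c].
      apply/forallP => x; apply/forallP => y; apply/implyP => hxy.
      apply/existsP; exists c; rewrite inE eqxx /=.
      case: (eqVneq x c) => [hx|hxc].
        by rewrite hx dist0 eq_sym (dist_eq0P e) -hx eq_sym.
      case: (eqVneq y c) => [->|hyc].
        by rewrite dist0 (dist_eq0P e).
      have : #|[set x; y]| <= #|[set~ c]|.
        apply: subset_leq_card; apply/subsetP => u.
        by rewrite !inE => /orP[] /eqP ->.
      by rewrite cards2 hxy cardsC1 hT2.
    have := dim_le hres; rewrite hk cards1.
    by [].
Qed.

Section PathBack.
Variables (T : finType) (e : rel T) (n : nat) (g : T -> 'I_n.+2) (gi : 'I_n.+2 -> T).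
Hypothesis ggi : cancel g gi.
Hypothesis gig : cancel gi g.
Hypothesis he : forall x y, e x y = path_rel (g x) (g y).

Let w0 := gi ord0.
Let hT : #|T| = n.+2.
Proof. by rewrite (bij_eq_card (f := g)) ?card_ord //; exists gi. Qed.

Lemma path_lb x y k : walk_of_len e x y k -> g x <= g y + k.
Proof.
case/walkP=> p [<- hp <-]; elim: p x hp => [|z p IH] x /=; first by rewrite addn0.
case/andP=> hxz hp; have := IH z hp; rewrite he /path_rel in hxz.
by case/orP: hxz => /eqP h; lia.
Qed.

Lemma path_ub i (hi : i < n.+2) : walk_of_len e (gi (inord i)) w0 i.
Proof.
elim: i hi => [|i IH] hi.
  have -> : (inord 0 : 'I_n.+2) = ord0 by apply: val_inj; rewrite /= inordK.
  exact: walk0.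
apply: (walk_cons (z := gi (inord i))); last by apply: IH; apply: ltnW.
by rewrite he !gig /path_rel !inordK // ?eqxx ?orbT //; apply: ltnW.
Qed.

Lemma path_dist x : dist e x w0 = g x.
Proof.
have hw : walk_of_len e x w0 (g x) by rewrite -{1}(ggi x) -{1}(inord_val (g x)); apply: path_ub.
apply/eqP; rewrite eqn_leq (dist_le hw) /=.
have := path_lb (dist_walk_of hw _); rewrite hT ltn_ord /w0 gig add0n; exact.
Qed.

Lemma path_res : resolving e [set w0].
Proof.
apply/forallP => x; apply/forallP => y; apply/implyP => hxy.
apply/existsP; exists w0; rewrite inE eqxx /= !path_dist.
by apply: contra hxy => /eqP /val_inj h; rewrite -(ggi x) h ggi.
Qed.

Lemma path_dim : metric_dim e = 1.
Proof.
apply/eqP; rewrite eqn_leq; apply/andP; split.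
  by rewrite -(cards1 w0); apply: dim_le; exact: path_res.
apply: dim_ge; first by rewrite hT.
move=> S hS; rewrite card_gt0; apply/set0Pn.
have hxy : gi ord0 != gi ord_max.
  by apply/eqP => /(congr1 g); rewrite !gig => /(congr1 (@nat_of_ord _)).
have /existsP[s /andP[hs _]] := implyP (forallP (forallP hS _) _) hxy.
by exists s.
Qed.

Lemma path_D : distinguishing_number e = 2.
Proof.
apply/eqP; rewrite eqn_leq; apply/andP; split.
  by have := D_resolving path_res; rewrite cards1 hT; apply.
apply: D_ge; first by rewrite hT.
move=> [|[|k]] // _ c.
  by case: (c w0).
pose rf x := gi (rev_ord (g x)).
have rinj : injective rf.
  by move=> x y /(can_inj gig) /rev_ord_inj /(can_inj ggi).
pose r := perm rinj.
rewrite /distinguishing negb_forall; apply/existsP; exists r; rewrite negb_imply.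
apply/andP; split.
  apply/andP; split.
    apply/forallP => x; apply/forallP => y; apply/eqP.
    rewrite !permE /rf !he !gig /path_rel /=.
    have := ltn_ord (g x); have := ltn_ord (g y).
    move: (nat_of_ord (g x)) (nat_of_ord (g y)) => a b hb ha.
    by apply/idP/idP => /orP[] /eqP h; apply/orP; lia.
  by apply/forallP => x; rewrite [c (r x)]ord1 [c x]ord1.
apply/eqP => /permP /(_ w0); rewrite permE perm1 /rf /w0 gig => /(congr1 g).
by rewrite !gig => /(congr1 (@nat_of_ord _)) /=; rewrite subn1.
Qed.

Lemma path_back : distinguishing_number e = (metric_dim e).+1.
Proof. by rewrite path_D path_dim. Qed.

End PathBack.

Section StarBack.
Variables (T : finType) (e : rel T) (n : nat) (c : T).
Hypothesis hn : 2 <= n.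
Hypothesis hT : #|T| = n.+1.
Hypothesis hE : forall x y, e x y = ((x == c) != (y == c)).

Let Lv := [set~ c].
Let hLv : #|Lv| = n. Proof. by rewrite cardsC1 hT. Qed.

Lemma star_irr x : e x x = false.
Proof. by rewrite hE; case: (x == c). Qed.

Lemma star_dc x : x != c -> dist e x c = 1.
Proof.
move=> hx; have hxc : e x c by rewrite hE eqxx (negbTE hx).
by apply/eqP; rewrite eqn_leq (dist_adj hxc) /= dist_gt0.
Qed.

Lemma star_cd x : x != c -> dist e c x = 1.
Proof.
move=> hx; have hxc : e c x by rewrite hE eqxx eq_sym (negbTE hx).
by apply/eqP; rewrite eqn_leq (dist_adj hxc) /= dist_gt0 // eq_sym.
Qed.

Lemma star_dl x y : x != c -> y != c -> x != y -> dist e x y = 2.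
Proof.
move=> hx hy hxy.
have hw : walk_of_len e x y 2.
  apply: (walk_cons (z := c)); first by rewrite hE eqxx (negbTE hx).
  by apply: walk1; rewrite hE eqxx (negbTE hy).
apply/eqP; rewrite eqn_leq (dist_le hw) /=.
case hd: (dist e x y) => [|[|//]].
  by move/dist_eq0: hd => h; rewrite h eqxx in hxy.
have := dist_walk_of hw; rewrite hT hd => /(_ (leq_ltn_trans hn (ltnSn _))).
case/walkP => p [hs hp hl].
case: p hs hp hl => [|z [|z' p]] //= _ hxz hz.
by move: hxz; rewrite andbT hz hE (negbTE hx) (negbTE hy).
Qed.

Lemma star_aut (s : {perm T}) : s c = c -> is_automorphism e s.
Proof.
move=> hs; have h : forall z, (s z == c) = (z == c).
  by move=> z; rewrite -{1}hs (inj_eq perm_inj).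
by apply/forallP => x; apply/forallP => y; rewrite !hE !h.
Qed.

Lemma star_res : exists2 S, resolving e S & #|S| = n.-1.
Proof.
have /card_gt1P[l1 [l2 [h1 h2 h12]]] : 1 < #|Lv| by rewrite hLv.
move: h1 h2; rewrite !inE => h1 h2.
pose S := Lv :\ l1.
have hS : #|S| = n.-1.
  have := cardsD1 l1 Lv; rewrite hLv !inE h1 add1n => ->; by [].
have hres : resolving e S.
  apply/forallP => x; apply/forallP => y; apply/implyP => hxy.
  apply/existsP.
  case hxS: (x \in S).
    exists x; rewrite hxS dist0 eq_sym /=.
    by rewrite (dist_eq0P e) eq_sym.
  case hyS: (y \in S).
    by exists y; rewrite hyS dist0 /= (dist_eq0P e).
  have hl2 : l2 \in S by rewrite !inE eq_sym h12 h2.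
  exists l2; rewrite hl2 /=.
  move: hxS hyS; rewrite !inE => /negbT hx /negbT hy.
  rewrite negb_and !negbK in hx; rewrite negb_and !negbK in hy.
  case/orP: hx => /eqP hx; case/orP: hy => /eqP hy.
  - by rewrite hx hy eqxx in hxy.
  - by rewrite hx hy (star_dl h1 h2) // star_cd.
  - by rewrite hx hy (star_dl h1 h2) // star_cd.
  - by rewrite hx hy eqxx in hxy.
by exists S.
Qed.

Lemma star_dim : metric_dim e = n.-1.
Proof.
have [S hres hS] := star_res.
apply/eqP; rewrite eqn_leq -{1}hS dim_le //=.
apply: dim_ge; first by rewrite hT; lia.
move=> S' hS'; rewrite leqNgt; apply/negP => hlt.
have hc2 : 1 < #|Lv :\: S'|.
  have := cardsID S' Lv; rewrite hLv => hc.
  have : #|Lv :&: S'| <= #|S'| by apply: subset_leq_card; apply: subsetIr.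
  lia.
case/card_gt1P: hc2 => u [v [hu hv huv]].
move: hu hv; rewrite !in_setD !inE => /andP[huS huc] /andP[hvS hvc].
have /existsP[s /andP[hs hd]] := implyP (forallP (forallP hS' u) v) huv.
have hsu : s != u by apply/eqP => h; rewrite -h hs in huS.
have hsv : s != v by apply/eqP => h; rewrite -h hs in hvS.
move: hd; case: (eqVneq s c) => [->|hsc].
  by rewrite !star_dc.
by rewrite !star_dl // eq_sym.
Qed.

Lemma star_D : distinguishing_number e = n.
Proof.
apply/eqP; rewrite eqn_leq; apply/andP; split.
  have [S hres hS] := star_res.
  have := D_resolving hres; rewrite hS hT prednK; last by apply: leq_trans hn.
  by apply; apply: leqnSn.
apply: D_ge; first by rewrite hT.
move=> k hk col.
case: (boolP [forall u in Lv, forall v in Lv, (col u == col v) ==> (u == v)]) => hinj.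
  have : #|Lv| <= #|'I_k|.
    apply: (@leq_card_in _ _ col) => u v hu hv h.
    by apply/eqP; move/forall_inP/(_ u hu)/forall_inP/(_ v hv)/implyP: hinj; apply; apply/eqP.
  by rewrite card_ord hLv leqNgt hk.
move: hinj; rewrite negb_forall_in => /exists_inP[u hu].
rewrite negb_forall_in => /exists_inP[v hv]; rewrite negb_imply => /andP[/eqP hcol huv].
move: hu hv; rewrite !inE => hu hv.
pose t := tperm u v.
rewrite /distinguishing negb_forall; apply/existsP; exists t; rewrite negb_imply.
apply/andP; split.
  apply/andP; split; first by apply: star_aut; rewrite tpermD // eq_sym.
  apply/forallP => x; apply/eqP.
  by case: tpermP => [->|->|] //.
apply/eqP => /permP /(_ u); rewrite tpermL perm1 => h.
by rewrite h eqxx in huv.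
Qed.

Lemma star_back : distinguishing_number e = (metric_dim e).+1.
Proof. by rewrite star_D star_dim prednK //; apply: leq_trans hn. Qed.

End StarBack.

Lemma backward (T : finType) (e : rel T) n : 2 <= n ->
  (graph_iso e (@path_rel n) \/ graph_iso e (@star_rel n)) ->
  distinguishing_number e = (metric_dim e).+1.
Proof.
move=> hn [[g [[gi ggi gig] he]]|[g [[gi ggi gig] he]]].
  case: n g gi ggi gig he hn => [|[|n]] // g gi ggi gig he _.
  exact: (path_back ggi gig he).
pose c := gi ord0.
have hc : forall x, (g x == ord0) = (x == c).
  by move=> x; rewrite /c -{1}(gig ord0) (inj_eq (can_inj ggi)).
have hT : #|T| = n.+1 by rewrite (bij_eq_card (f := g)) ?card_ord //; exists gi.
apply: (star_back hn hT) => x y; by rewrite he /star_rel !hc.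
Qed.

Theorem theorem3p2 (T : finType) (e : rel T) :
  is_tree e -> 2 <= #|T| ->
  (distinguishing_number e = (metric_dim e).+1 <->
   exists n : nat, 2 <= n /\ (graph_iso e (@path_rel n) \/ graph_iso e (@star_rel n))).
Proof.
move=> tree hT; split; first exact: forward.
by case=> n [hn h]; apply: (backward hn h).
Qed.
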